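(* Let $Q$ be a Foulis quantale. For $u\in Q$ let $\sigma_u\colon[Q]\to[Q]$ be the Sasaki action $\sigma_u(k)=(u\cdot k)^{\perp\perp}$. Then $\sigma_u\in\mathrm{Lin}([Q])$ for every $u$, and the map $h\colon Q\to\mathrm{Lin}([Q])$, $h(u)=\sigma_u$, is a homomorphism of Foulis quantales, where $\mathrm{Lin}([Q])$ carries the Foulis quantale structure given by composition, pointwise joins, identity unit, involution $f\mapsto f^\star$, and $[f]=\pi_{f^\star(1)^\perp}$. In particular $h(u^* )=h(u)^\star$ and $h(u^\perp)=h(u)^\perp$ for all $u\in Q$.
   Context: A quantale is a complete lattice $Q$ (join $\bigsqcup$) with associative multiplication distributing over arbitrary joins on both sides; unital if it has a two-sided unit $e$; involutive if it has a join-preserving semigroup involution $*$. A Foulis quantale is a unital involutive quantale $Q$ with an endomap $[-]\colon Q\to Q$ such that: (a) $[s]\cdot[s]=[s]=[s]^*$; (b) $[e]=0$; (c) $s\cdot x=0$ iff $x=[s]\cdot y$ for some $y\in Q$. For $t\in Q$ put $t^\perp=[t^*]$. The set $[Q]=\{[t]\mid t\in Q\}$ is a complete orthomodular lattice with order $k_1\le k_2$ iff $k_1=k_2\cdot k_1$, top $[0]$, orthocomplement $k^\perp=[k]$, joins $\bigvee S=[[\bigsqcup S]]$. For a complete orthomodular lattice $X$, write $x\perp y$ iff $x\le y^\perp$; a map $f\colon X\to X$ is linear if there is $g$ with $f(x)\perp y\iff x\perp g(y)$ for all $x,y$ (such $g$ is unique, denoted $f^\star$); $\mathrm{Lin}(X)$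 is the set of linear maps; for $a\in X$ the Sasaki projection is $\pi_a(y)=a\wedge(a^\perp\vee y)$. A homomorphism of Foulis quantales is a map preserving arbitrary joins, binary multiplication, unit, involution, and $(-)^\perp$. *)

(* Defs.v *)
Record FoulisQuantale := {
  fq_carrier :> Type;
  fq_le : fq_carrier -> fq_carrier -> Prop;
  fq_bigjoin : (fq_carrier -> Prop) -> fq_carrier;
  fq_mul : fq_carrier -> fq_carrier -> fq_carrier;
  fq_e : fq_carrier;
  fq_inv : fq_carrier -> fq_carrier;
  fq_br : fq_carrier -> fq_carrier;
  fq_le_refl : forall x, fq_le x x;
  fq_le_trans : forall x y z, fq_le x y -> fq_le y z -> fq_le x z;
  fq_le_antisym : forall x y, fq_le x y -> fq_le y x -> x = y;
  fq_bigjoin_ub : forall (S : fq_carrier -> Prop) x, S x -> fq_le x (fq_bigjoin S);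
  fq_bigjoin_least : forall (S : fq_carrier -> Prop) z,
      (forall x, S x -> fq_le x z) -> fq_le (fq_bigjoin S) z;
  fq_mulA : forall x y z, fq_mul x (fq_mul y z) = fq_mul (fq_mul x y) z;
  fq_mul_joinr : forall a (S : fq_carrier -> Prop),
      fq_mul a (fq_bigjoin S) = fq_bigjoin (fun y => exists x, S x /\ y = fq_mul a x);
  fq_mul_joinl : forall a (S : fq_carrier -> Prop),
      fq_mul (fq_bigjoin S) a = fq_bigjoin (fun y => exists x, S x /\ y = fq_mul x a);
  fq_mul1l : forall x, fq_mul fq_e x = x;
  fq_mul1r : forall x, fq_mul x fq_e = x;
  fq_invK : forall x, fq_inv (fq_inv x) = x;
  fq_invM : forall x y, fq_inv (fq_mul x y) = fq_mul (fq_inv y) (fq_inv x);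
  fq_inv_join : forall (S : fq_carrier -> Prop),
      fq_inv (fq_bigjoin S) = fq_bigjoin (fun y => exists x, S x /\ y = fq_inv x);
  fq_br_idem : forall s, fq_mul (fq_br s) (fq_br s) = fq_br s;
  fq_br_sa : forall s, fq_inv (fq_br s) = fq_br s;
  fq_br_e : fq_br fq_e = fq_bigjoin (fun _ => False);
  fq_br_ann : forall s x, fq_mul s x = fq_bigjoin (fun _ => False) <->
                          exists y, x = fq_mul (fq_br s) y
}.

Arguments fq_le {_}. Arguments fq_bigjoin {_}. Arguments fq_mul {_}.
Arguments fq_e {_}. Arguments fq_inv {_}. Arguments fq_br {_}.

Section FQ.
Variable Q : FoulisQuantale.

Definition fq_zero : Q := fq_bigjoin (fun _ => False).

Definition fq_perp (t : Q) : Q := fq_br (fq_inv t).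

(* The set [Q] = { [t] | t in Q } *)
Definition inK (k : Q) : Prop := exists t, k = fq_br t.
Definition K := { k : Q | inK k }.

Definition mkK (t : Q) : K := exist inK (fq_br t) (ex_intro _ t eq_refl).

Definition leK (k1 k2 : K) : Prop := proj1_sig k1 = fq_mul (proj1_sig k2) (proj1_sig k1).
Definition perpK (k : K) : K := mkK (proj1_sig k).
Definition topK : K := mkK fq_zero.
Definition bigjoinK (S : K -> Prop) : K :=
  mkK (fq_br (fq_bigjoin (fun x => exists k, S k /\ x = proj1_sig k))).
Definition joinK (a b : K) : K := bigjoinK (fun k => k = a \/ k = b).
Definition meetK (a b : K) : K := perpK (joinK (perpK a) (perpK b)).

Definition orthK (x y : K) : Prop := leK x (perpK y).

Definition is_adjoint (f g : K -> K) : Prop :=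
  forall x y, orthK (f x) y <-> orthK x (g y).
Definition linearK (f : K -> K) : Prop := exists g, is_adjoint f g.

Definition sasaki_proj (a : K) (y : K) : K := meetK a (joinK (perpK a) y).

Definition sasaki_action (u : Q) (k : K) : K :=
  mkK (fq_inv (fq_perp (fq_mul u (proj1_sig k)))).

End FQ.

Arguments fq_zero {_}. Arguments fq_perp {_}. Arguments leK {_}.
Arguments perpK {_}. Arguments topK {_}. Arguments bigjoinK {_}.
Arguments joinK {_}. Arguments meetK {_}. Arguments orthK {_}.
Arguments is_adjoint {_}. Arguments linearK {_}. Arguments sasaki_proj {_}.
Arguments sasaki_action {_}.

(* Main.v *)
Require Import Defs.
From Stdlib Require Import Setoid.

Section Thy.
Variable Q : FoulisQuantale.
Local Notation mul := (@fq_mul Q).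
Local Notation inv := (@fq_inv Q).
Local Notation br := (@fq_br Q).
Local Notation Z := (@fq_zero Q).

Definition cl (x : Q) : Q := br (br (inv x)).
Definition jn (a b : Q) : Q := fq_bigjoin (fun z => z = a \/ z = b).

Lemma le0 x : fq_le Z x.
Proof. apply fq_bigjoin_least. intros _ []. Qed.

Lemma join_zero (T : Q -> Prop) : fq_bigjoin T = Z <-> forall x, T x -> x = Z.
Proof.
split.
- intros H x Tx. apply fq_le_antisym; [|apply le0]. rewrite <- H. now apply fq_bigjoin_ub.
- intros H. apply fq_le_antisym; [|apply le0]. apply fq_bigjoin_least.
  intros x Tx. rewrite (H x Tx). apply fq_le_refl.
Qed.

Lemma bigjoin_ext (T T' : Q -> Prop) : (forall x, T x <-> T' x) -> fq_bigjoin T = fq_bigjoin T'.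
Proof.
intros H. apply fq_le_antisym; apply fq_bigjoin_least; intros x Tx; apply fq_bigjoin_ub; apply H; assumption.
Qed.

Lemma mul0r x : mul Z x = Z.
Proof. unfold fq_zero at 1. rewrite fq_mul_joinl. apply join_zero. intros y [z [[] _]]. Qed.
Lemma mulr0 x : mul x Z = Z.
Proof. unfold fq_zero at 1. rewrite fq_mul_joinr. apply join_zero. intros y [z [[] _]]. Qed.
Lemma inv0 : inv Z = Z.
Proof. unfold fq_zero at 1. rewrite fq_inv_join. apply join_zero. intros y [z [[] _]]. Qed.

Lemma zero_inv a b : mul a b = Z -> mul (inv b) (inv a) = Z.
Proof. intros H. rewrite <- fq_invM, H. apply inv0. Qed.
Lemma zero_inv_iff a b : mul a b = Z <-> mul (inv b) (inv a) = Z.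
Proof. split; [apply zero_inv|]. intros H. apply zero_inv in H. now rewrite !fq_invK in H. Qed.

Lemma L2 s : mul s (br s) = Z.
Proof. apply (proj2 (fq_br_ann Q s (br s))). exists fq_e. now rewrite fq_mul1r. Qed.
Lemma L1 s x : mul s x = Z -> mul (br s) x = x.
Proof. intros H. destruct (proj1 (fq_br_ann Q s x) H) as [y ->]. now rewrite fq_mulA, fq_br_idem. Qed.
Lemma L3 s x : mul (br s) x = x -> mul s x = Z.
Proof. intros H. rewrite <- H, fq_mulA, L2. apply mul0r. Qed.
Lemma L2' s : inv s = s -> mul (br s) s = Z.
Proof. intros H. generalize (zero_inv _ _ (L2 s)). rewrite fq_br_sa, H. auto. Qed.

Lemma proj_antisym a b : inv a = a -> inv b = b -> a = mul b a -> b = mul a b -> a = b.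
Proof.
intros Ha Hb H1 H2.
assert (H : a = inv (mul b a)) by (rewrite <- H1; auto).
rewrite fq_invM, Ha, Hb in H. rewrite H2. exact H.
Qed.

Lemma brbr t : br (br (br t)) = br t.
Proof.
set (k := br t).
assert (Hk : inv k = k) by apply fq_br_sa.
assert (Ha : k = mul (br (br k)) k) by (symmetry; apply L1; apply L2'; exact Hk).
assert (Hb : br (br k) = mul k (br (br k))).
{ symmetry. apply L1.
  pose proof (zero_inv _ _ (L2 t)) as Hz. rewrite fq_br_sa in Hz.
  destruct (proj1 (fq_br_ann Q k (inv t)) Hz) as [y Hy].
  rewrite <- (fq_invK Q t), Hy, fq_invM, fq_br_sa, <- fq_mulA, L2. apply mulr0. }
apply proj_antisym; [apply fq_br_sa | exact Hk | exact Hb | exact Ha].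
Qed.

Lemma cl_sa x : inv (cl x) = cl x.
Proof. unfold cl. apply fq_br_sa. Qed.

Lemma cl_fix x : mul (cl x) x = x.
Proof. unfold cl. apply L1. pose proof (zero_inv _ _ (L2 (inv x))) as H.
rewrite fq_br_sa, fq_invK in H. exact H. Qed.

Lemma ann_cl y x : mul y (cl x) = Z <-> mul y x = Z.
Proof.
split.
- intros H. rewrite <- (cl_fix x), fq_mulA, H. apply mul0r.
- intros H.
  pose proof (L1 _ _ H) as Hq.
  assert (H1 : mul (br (br y)) x = Z).
  { rewrite <- Hq, fq_mulA, (L2' (br y) (fq_br_sa Q y)). apply mul0r. }
  pose proof (zero_inv _ _ H1) as H2. rewrite fq_br_sa in H2.
  pose proof (L1 _ _ H2) as H3.
  assert (H4 : inv (mul (br (inv x)) (br (br y))) = mul (br (br y)) (br (inv x)))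
    by (rewrite fq_invM, !fq_br_sa; reflexivity).
  rewrite H3, fq_br_sa in H4.
  assert (H5 : mul (br (br y)) (br (br (inv x))) = Z).
  { rewrite H4, <- fq_mulA, L2. apply mulr0. }
  pose proof (L1 _ _ H5) as H6. rewrite brbr in H6.
  apply L3. exact H6.
Qed.

Lemma eqKK s t : (forall l, inK Q l -> (mul l (br s) = Z <-> mul l (br t) = Z)) -> br s = br t.
Proof.
intros H.
assert (A : forall a b, (forall l, inK Q l -> (mul l (br a) = Z <-> mul l (br b) = Z)) ->
   mul (br (br b)) (br (br a)) = br (br a)).
{ intros a b Hab. apply L1. apply (proj2 (zero_inv_iff _ _)). rewrite !fq_br_sa.
  apply (proj1 (Hab (br (br a)) (ex_intro _ (br a) eq_refl))).
  apply L2'. apply fq_br_sa. }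
assert (E : br (br s) = br (br t)).
{ apply proj_antisym; try apply fq_br_sa.
  - symmetry. apply A. intros l Hl. specialize (H l Hl). tauto.
  - symmetry. apply A. intros l Hl. specialize (H l Hl). tauto. }
rewrite <- (brbr s), <- (brbr t), E. reflexivity.
Qed.

Lemma eqcl x x' : (forall y, mul y (cl x) = Z <-> mul y (cl x') = Z) -> cl x = cl x'.
Proof. intros H. unfold cl. apply eqKK. intros l _. apply H. Qed.

Lemma Kinv (k : K Q) : inv (proj1_sig k) = proj1_sig k.
Proof. destruct k as [k [t ->]]. apply fq_br_sa. Qed.

Lemma orth (x y : K Q) : orthK x y <-> mul (proj1_sig y) (proj1_sig x) = Z.
Proof. unfold orthK, leK, perpK, mkK. simpl. split; intros H.
- apply L3. symmetry. exact H.
- symmetry. apply L1. exact H.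
Qed.

Lemma swap3 a b c : inv a = a -> inv c = c -> (mul a (mul b c) = Z <-> mul c (mul (inv b) a) = Z).
Proof.
intros Ha Hc. split; intros H; apply zero_inv in H; rewrite fq_invM in H.
- rewrite Ha, Hc, <- fq_mulA in H. exact H.
- rewrite fq_invK, Ha, Hc, <- fq_mulA in H. exact H.
Qed.

Lemma sa_proj u (k : K Q) : proj1_sig (sasaki_action u k) = cl (mul u (proj1_sig k)).
Proof. unfold sasaki_action, fq_perp, cl, mkK. simpl. rewrite fq_br_sa. reflexivity. Qed.

Lemma sa_adj u : is_adjoint (sasaki_action u) (sasaki_action (inv u)).
Proof.
intros x y. rewrite !orth, !sa_proj. rewrite ann_cl.
rewrite (zero_inv_iff (cl _)), cl_sa, Kinv, ann_cl.
apply swap3; apply Kinv.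
Qed.

Lemma adj_unique u g : is_adjoint (sasaki_action u) g ->
  forall k, proj1_sig (g k) = proj1_sig (sasaki_action (inv u) k).
Proof.
intros Hg k. destruct (proj2_sig (g k)) as [t Ht]. rewrite Ht, sa_proj. unfold cl.
apply eqKK. intros l [r ->].
change (br (br (inv ?x))) with (cl x). rewrite ann_cl. rewrite <- Ht.
rewrite (zero_inv_iff (br r)), fq_br_sa, Kinv.
change (br r) with (proj1_sig (mkK Q r)).
rewrite <- (orth (mkK Q r) (g k)), <- (Hg (mkK Q r) k), orth, sa_proj, ann_cl. simpl.
apply swap3; [apply Kinv | apply fq_br_sa].
Qed.

Lemma jn_zero_l a b x : mul (jn a b) x = Z <-> mul a x = Z /\ mul b x = Z.
Proof.
unfold jn. rewrite fq_mul_joinl, join_zero. split.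
- intros H; split; apply H; eauto.
- intros [Ha Hb] z [w [[-> | ->] ->]]; assumption.
Qed.

Lemma br0 : br Z = fq_e.
Proof.
destruct (proj1 (fq_br_ann Q Z fq_e) (mul0r _)) as [y Hy].
rewrite <- (fq_mul1r Q (br Z)), Hy, fq_mulA, fq_br_idem. reflexivity.
Qed.

Lemma joinK_proj a b : proj1_sig (joinK a b) = br (br (jn (proj1_sig a) (proj1_sig b))).
Proof.
unfold joinK, bigjoinK, mkK. simpl. f_equal. f_equal. apply bigjoin_ext. intros z; split.
- intros [k0 [[-> | ->] ->]]; auto.
- intros [-> | ->]; [exists a | exists b]; auto.
Qed.

Lemma sp_proj a k : proj1_sig (sasaki_proj a k) =
  br (jn (br (proj1_sig a)) (br (jn (br (proj1_sig a)) (proj1_sig k)))).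
Proof.
transitivity (br (proj1_sig (joinK (perpK a) (perpK (joinK (perpK a) k))))).
{ reflexivity. }
rewrite joinK_proj, brbr.
change (proj1_sig (perpK ?x)) with (br (proj1_sig x)).
rewrite joinK_proj, brbr. reflexivity.
Qed.


Lemma core_abs P k : inv P = P -> br (br P) = P -> inv k = k ->
  cl (mul P k) = br (jn (br P) (br (jn (br P) k))).
Proof.
intros HPi HPb Hki.
remember (br (jn (br P) k)) as N eqn:EN.
remember (jn (br P) N) as J eqn:EJ.
remember (br J) as B eqn:EB.
remember (cl (mul P k)) as A eqn:EA.
assert (HNi : inv N = N) by (rewrite EN; apply fq_br_sa).
assert (HBi : inv B = B) by (rewrite EB; apply fq_br_sa).
assert (HAi : inv A = A) by (rewrite EA; apply cl_sa).
assert (HN1 : mul (jn (br P) k) N = Z) by (rewrite EN; apply L2).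
apply jn_zero_l in HN1. destruct HN1 as [HN1 HN2].
assert (HPN : mul P N = N) by (rewrite <- HPb at 1; apply L1; exact HN1).
assert (HNP : mul N P = N).
{ transitivity (inv (mul P N)). rewrite fq_invM, HNi, HPi; reflexivity. rewrite HPN; exact HNi. }
assert (HkN : mul N k = Z).
{ apply zero_inv in HN2. rewrite HNi, Hki in HN2. exact HN2. }
assert (HAB : mul B A = A).
{ rewrite EB. apply L1. rewrite EJ. apply jn_zero_l. split.
  - rewrite EA. apply ann_cl. rewrite fq_mulA, (L2' P HPi). apply mul0r.
  - rewrite EA. apply ann_cl. rewrite fq_mulA, HNP. exact HkN. }
assert (HJB : mul J B = Z) by (rewrite EB; apply L2).
rewrite EJ in HJB. apply jn_zero_l in HJB. destruct HJB as [HB1 HB2].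
assert (HPB : mul P B = B) by (rewrite <- HPb at 1; apply L1; exact HB1).
assert (HBP : mul B P = B).
{ transitivity (inv (mul P B)). rewrite fq_invM, HBi, HPi; reflexivity. rewrite HPB; exact HBi. }
assert (HNB : mul (br N) B = B) by (apply L1; exact HB2).
assert (HBN : mul B (br N) = B).
{ transitivity (inv (mul (br N) B)). rewrite fq_invM, HBi, fq_br_sa; reflexivity.
  rewrite HNB; exact HBi. }
assert (HAq : A = br (br (inv (mul P k)))) by (rewrite EA; reflexivity).
remember (br (inv (mul P k))) as q eqn:Eq.
assert (Hqi : inv q = q) by (rewrite Eq; apply fq_br_sa).
assert (Hq1 : mul k (mul P q) = Z).
{ rewrite fq_mulA. assert (H : mul (inv (mul P k)) q = Z) by (rewrite Eq; apply L2).
  rewrite fq_invM, Hki, HPi in H. exact H. }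
assert (Hq2 : mul (br P) (mul P q) = Z) by (rewrite fq_mulA, (L2' P HPi); apply mul0r).
assert (Hq3 : mul (jn (br P) k) (mul P q) = Z) by (apply jn_zero_l; split; assumption).
apply L1 in Hq3. rewrite <- EN in Hq3.
assert (Hq4 : mul (br N) (mul P q) = Z).
{ rewrite <- Hq3, fq_mulA, (L2' N HNi). apply mul0r. }
assert (HBq : mul B q = Z).
{ rewrite <- HBP, <- HBN, <- !fq_mulA, Hq4. apply mulr0. }
assert (HBA : mul A B = B).
{ rewrite HAq. apply L1. apply (proj2 (zero_inv_iff _ _)). rewrite HBi, Hqi. exact HBq. }
apply proj_antisym; [exact HAi | exact HBi | symmetry; exact HAB | symmetry; exact HBA].
Qed.

End Thy.

Theorem mainTheorem8 (Q : FoulisQuantale) :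
  (forall u : Q, linearK (sasaki_action u)) /\
  (forall (S : Q -> Prop) (k : K Q),
      proj1_sig (sasaki_action (fq_bigjoin S) k) =
      proj1_sig (bigjoinK (fun x => exists u, S u /\ x = sasaki_action u k))) /\
  (forall (u v : Q) (k : K Q),
      proj1_sig (sasaki_action (fq_mul u v) k) =
      proj1_sig (sasaki_action u (sasaki_action v k))) /\
  (forall k : K Q, proj1_sig (sasaki_action fq_e k) = proj1_sig k) /\
  (forall (u : Q) (g : K Q -> K Q), is_adjoint (sasaki_action u) g ->
      forall k, proj1_sig (sasaki_action (fq_inv u) k) = proj1_sig (g k)) /\
  (forall (u : Q) (g g' : K Q -> K Q),
      is_adjoint (sasaki_action u) g -> is_adjoint g g' ->
      forall k, proj1_sig (sasaki_action (fq_perp u) k) =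
              proj1_sig (sasaki_proj (perpK (g' topK)) k)).
Proof.
split.
{ intros u. exists (sasaki_action (fq_inv u)). apply sa_adj. }
split.
{ intros S k. rewrite sa_proj. unfold bigjoinK, mkK. simpl.
  set (TJ := fq_bigjoin (fun x => exists k0, (exists u, S u /\ k0 = sasaki_action u k) /\ x = proj1_sig k0)).
  assert (HTi : fq_inv TJ = TJ).
  { unfold TJ. rewrite fq_inv_join. apply bigjoin_ext. intros z. split.
    - intros [x [Hx ->]]. destruct Hx as [k0 [Hk0 ->]]. rewrite Kinv. eauto.
    - intros Hz. exists z. split; [exact Hz|]. destruct Hz as [k0 [_ ->]]. symmetry; apply Kinv. }
  transitivity (cl Q TJ). 2: { unfold cl. rewrite HTi. reflexivity. }
  apply eqcl. intros y. rewrite !ann_cl.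
  rewrite fq_mul_joinl, fq_mul_joinr, join_zero. unfold TJ. rewrite fq_mul_joinr, join_zero.
  split.
  - intros H z [x [[k0 [[v [Sv ->]] ->]] ->]]. rewrite sa_proj, ann_cl. apply H.
    exists (fq_mul v (proj1_sig k)); split; [exists v; split; auto | reflexivity].
  - intros H z [x [[v [Sv ->]] ->]]. apply (proj1 (ann_cl Q y _)).
    rewrite <- sa_proj. apply H. exists (proj1_sig (sasaki_action v k)); split; [|reflexivity].
    exists (sasaki_action v k); split; [exists v; auto | reflexivity]. }
split.
{ intros u v k. rewrite !sa_proj. apply eqcl. intros y. rewrite !ann_cl.
  rewrite (fq_mulA Q y u (cl Q _)), ann_cl, !fq_mulA. reflexivity. }
split.
{ intros k. rewrite sa_proj, fq_mul1l. destruct k as [k [t ->]]. simpl.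
  unfold cl. rewrite fq_br_sa. apply brbr. }
split.
{ intros u g Hg k. symmetry. apply adj_unique. exact Hg. }
{ intros u g g' Hg Hg' k.
  assert (Hadj : is_adjoint (sasaki_action (fq_inv u)) g').
  { intros x y. rewrite <- (Hg' x y). rewrite !orth. rewrite (adj_unique Q u g Hg x). reflexivity. }
  pose proof (adj_unique Q _ _ Hadj topK) as Ht. rewrite fq_invK in Ht.
  assert (HP : proj1_sig (perpK (g' topK)) = fq_br (fq_inv u)).
  { unfold perpK, mkK. simpl. rewrite Ht, sa_proj. unfold topK, mkK. simpl.
    rewrite br0, fq_mul1r. unfold cl. apply brbr. }
  rewrite sp_proj, HP, sa_proj. unfold fq_perp.
  apply core_abs; [apply fq_br_sa | apply brbr | apply Kinv]. }
Qed.
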